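(* Let $A=e\int_0^1 \frac{e^{-1/x}}{x}\,dx$. Let $b_1=b_2=1$, $b_3=b_4=2$, $b_5=b_6=3$, and in general $b_{2j-1}=b_{2j}=j$ for $j\ge1$. Put $R_0=1$ and, for $N\ge1$, $$R_N=\cfrac{1}{1+\cfrac{b_1}{1+\cfrac{b_2}{\ddots\,1+\cfrac{b_{N-1}}{1+b_N}}}}.$$ Then $R_N\to A$ as $N\to\infty$, i.e. $$A=\cfrac{1}{1+\cfrac{1}{1+\cfrac{1}{1+\cfrac{2}{1+\cfrac{2}{1+\cfrac{3}{1+\cfrac{3}{1+\cdots}}}}}}},$$ and the approximants alternate about $A$: $R_N>A$ for every even $N\ge0$ and $R_N<A$ for every odd $N\ge1$ (so $R_1=\tfrac12$, $R_3=\tfrac47$, $R_5=\tfrac{20}{34},\dots$ lie below $A$ and $R_0=1$, $R_2=\tfrac23$, $R_4=\tfrac8{13},\dots$ lie above $A$).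
   Context: $e$ is the base of the natural logarithm. *)

(* Defs.v *)
From Stdlib Require Import Reals Lra Lia.
Open Scope R_scope.

(* Integrand e^{-1/x}/x on (0,1], extended by its limit 0 at x <= 0
   (the value at the single point 0 does not affect the Riemann integral). *)
Definition integrand (x : R) : R :=
  if Rle_dec x 0 then 0 else exp (- / x) / x.

(* b_k = ceil(k/2) for k >= 1, i.e. b_{2j-1} = b_{2j} = j. *)
Definition b (k : nat) : R := INR ((k + 1) / 2)%nat.

Fixpoint cf_tail (n k : nat) : R :=
  match n with
  | O => 1
  | S n' => 1 + b k / cf_tail n' (S k)
  end.

Definition Rapprox (N : nat) : R := 1 / cf_tail N 1.

(* Main.v *)
Require Import Defs.
From Coquelicot Require Import Coquelicot.
From Stdlib Require Import Reals Lra Lia Arith.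
Open Scope R_scope.

Lemma b_nonneg k : 0 <= b k.
Proof. unfold b. apply pos_INR. Qed.

Lemma b_even i : b (2*i) = INR i.
Proof. unfold b. f_equal. replace (2*i+1)%nat with (1+i*2)%nat by lia. rewrite Nat.div_add by lia. reflexivity. Qed.
Lemma b_odd i : b (2*i+1) = INR i + 1.
Proof. unfold b. replace (2*i+1+1)%nat with ((i+1)*2)%nat by lia. rewrite Nat.div_mul by lia. rewrite plus_INR. reflexivity. Qed.

Lemma b_le k : b k <= (INR k + 1)/2.
Proof.
  destruct (Nat.Even_or_Odd k) as [[i Hi]|[i Hi]]; subst.
  - rewrite b_even, mult_INR. simpl. lra.
  - rewrite b_odd, plus_INR, mult_INR. simpl. lra.
Qed.

Lemma b_ratio k : b k * b (S k) * (INR k + 3)^2 <= (INR k + 1)^2 * (1 + b (S k))^2.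
Proof.
  assert (0 <= INR (k/2)) by apply pos_INR.
  destruct (Nat.Even_or_Odd k) as [[i Hi]|[i Hi]]; subst.
  - replace (S (2*i)) with (2*i+1)%nat by lia.
    rewrite b_even, b_odd, mult_INR. simpl.
    assert (0 <= INR i) by apply pos_INR.
    assert (0 <= INR i * INR i) by nra. assert (0 <= INR i * INR i * INR i) by nra. nra.
  - replace (S (2*i+1)) with (2*(i+1))%nat by lia.
    rewrite b_even, b_odd, ?plus_INR, ?mult_INR. simpl.
    assert (0 <= INR i) by apply pos_INR. right. ring.
Qed.

Lemma cf_ge1 n k : 1 <= cf_tail n k.
Proof.
  revert k; induction n; intro k; simpl. lra.
  specialize (IHn (S k)). pose proof (b_nonneg k).
  assert (0 <= b k / cf_tail n (S k)) by (unfold Rdiv; apply Rmult_le_pos; [lra| apply Rlt_le, Rinv_0_lt_compat; lra]). lra.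
Qed.

Definition E n k := cf_tail (S n) k - cf_tail n k.

Lemma E_rec n k : E (S n) k = - b k * E n (S k) / (cf_tail (S n) (S k) * cf_tail n (S k)).
Proof.
  unfold E. change (cf_tail (S (S n)) k) with (1 + b k / cf_tail (S n) (S k)).
  change (cf_tail (S n) k) with (1 + b k / cf_tail n (S k)).
  pose proof (cf_ge1 (S n) (S k)). pose proof (cf_ge1 n (S k)).
  field. lra.
Qed.

Lemma cf_prod n k : cf_tail (S n) k * cf_tail n (S k) = cf_tail n (S k) + b k.
Proof.
  change (cf_tail (S n) k) with (1 + b k / cf_tail n (S k)).
  pose proof (cf_ge1 n (S k)). field. lra.
Qed.

Lemma E_bound n : forall k, Rabs (E n k) <= (INR k + 1)^2 / (INR n + INR k + 1)
                  /\ Rabs (E (S n) k) <= (INR k + 1)^2 / (INR (S n) + INR k + 1).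
Proof.
  induction n; intro k.
  - assert (H0 : forall k, Rabs (E 0 k) <= (INR k + 1)^2 / (INR 0 + INR k + 1)).
    { intro k0. unfold E. simpl. replace (1 + b k0 / 1 - 1) with (b k0) by field.
      rewrite Rabs_right by (apply Rle_ge, b_nonneg). pose proof (b_le k0).
      pose proof (pos_INR k0).
      apply Rle_trans with (INR k0 + 1); [lra|]. right. field. lra. }
    split. apply H0.
    rewrite E_rec. specialize (H0 (S k)).
    pose proof (cf_ge1 1 (S k)). pose proof (cf_ge1 0 (S k)).
    assert (Hc : cf_tail 1 (S k) * cf_tail 0 (S k) = 1 + b (S k)).
    { simpl. field. }
    rewrite Hc. unfold E at 1. simpl cf_tail.
    replace (1 + b (S k) / 1 - 1) with (b (S k)) by field.
    pose proof (b_nonneg k). pose proof (b_nonneg (S k)). pose proof (b_le k).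
    pose proof (pos_INR k).
    assert (Hq : 0 <= b k * b (S k) / (1 + b (S k))).
    { unfold Rdiv. apply Rmult_le_pos. nra. apply Rlt_le, Rinv_0_lt_compat. lra. }
    replace (- b k * b (S k) / (1 + b (S k))) with (- (b k * b (S k) / (1 + b (S k)))) by (field; lra).
    rewrite Rabs_Ropp, Rabs_right by lra.
    assert (b k * b (S k) / (1 + b (S k)) <= b k).
    { apply Rmult_le_reg_r with (1 + b (S k)). lra. unfold Rdiv. rewrite Rmult_assoc, Rinv_l by lra. nra. }
    apply Rle_trans with (b k). lra.
    apply Rle_trans with ((INR k + 1)/2). lra.
    rewrite S_INR. simpl INR. apply Rmult_le_reg_r with (0 + 1 + INR k + 1). lra.
    replace ((INR k + 1) ^ 2 / (0 + 1 + INR k + 1) * (0 + 1 + INR k + 1)) with ((INR k + 1) ^ 2) by (field; lra). nra.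
  - destruct (IHn (S (S k))) as [H1 _]. split. apply (proj2 (IHn k)).
    rewrite E_rec, E_rec.
    pose proof (cf_ge1 (S (S n)) (S k)). pose proof (cf_ge1 (S n) (S k)).
    pose proof (cf_ge1 (S n) (S (S k))). pose proof (cf_ge1 n (S (S k))).
    pose proof (cf_prod (S n) (S k)). pose proof (cf_prod n (S k)).
    pose proof (b_nonneg k). pose proof (b_nonneg (S k)). pose proof (b_ratio k).
    set (X := cf_tail (S (S n)) (S k)) in *. set (Y := cf_tail (S n) (S k)) in *.
    set (Z := cf_tail (S n) (S (S k))) in *. set (W := cf_tail n (S (S k))) in *.
    set (e := E n (S (S k))) in *.
    replace (- b k * (- b (S k) * e / (Z * W)) / (X * Y))
      with (b k * b (S k) * e / ((X * Z) * (Y * W))) by (field; lra).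
    replace (b k * b (S k) * e / (X * Z * (Y * W))) with ((b k * b (S k) / (X * Z * (Y * W))) * e) by (field; lra).
    rewrite Rabs_mult, (Rabs_right (b k * b (S k) / (X * Z * (Y * W)))).
    2:{ apply Rle_ge. unfold Rdiv. apply Rmult_le_pos. nra. apply Rlt_le, Rinv_0_lt_compat. nra. }
    replace (b k * b (S k) / (X * Z * (Y * W)) * Rabs e) with (b k * b (S k) * Rabs e * / (X * Z * (Y * W))) by (field; lra).
    rewrite !S_INR in *.
    set (kk := INR k) in *. set (nn := INR n) in *.
    assert (0 <= kk) by apply pos_INR. assert (0 <= nn) by apply pos_INR.
    replace (nn + (kk + 1 + 1) + 1) with (nn + kk + 3) in H1 by ring.
    replace (kk + 1 + 1 + 1) with (kk + 3) in H1 by ring.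
    replace (nn + 1 + 1 + kk + 1) with (nn + kk + 3) by ring.
    assert (XZ : 1 + b (S k) <= X * Z) by lra.
    assert (YW : 1 + b (S k) <= Y * W) by lra.
    assert (0 <= Rabs e) by apply Rabs_pos.
    set (B := 1 + b (S k)) in *.
    assert (Hbb : 0 <= b k * b (S k)) by (apply Rmult_le_pos; lra).
    assert (HB : 1 <= B) by (unfold B; lra).
    apply Rle_trans with (b k * b (S k) * Rabs e * / (B * B)).
    { apply Rmult_le_compat_l. apply Rmult_le_pos; lra. apply Rinv_le_contravar. nra. apply Rmult_le_compat; lra. }
    apply Rle_trans with (b k * b (S k) * ((kk + 3)^2 / (nn + kk + 3)) * / (B * B)).
    { apply Rmult_le_compat_r. apply Rlt_le, Rinv_0_lt_compat. nra.
      apply Rmult_le_compat_l. lra. exact H1. }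
    replace (b k * b (S k) * ((kk + 3) ^ 2 / (nn + kk + 3)) * / (B * B))
      with ((b k * b (S k) * (kk + 3) ^ 2) / (B * B * (nn + kk + 3))) by (field; nra).
    unfold Rdiv. apply Rmult_le_reg_r with (B * B * (nn+kk+3)). nra.
    rewrite Rmult_assoc, Rinv_l by nra.
    replace ((kk + 1) ^ 2 * / (nn + kk + 3) * (B * B * (nn + kk + 3)))
      with ((kk + 1) ^ 2 * B^2) by (field; nra).
    lra.
Qed.

Section Main.
Variable f : nat -> R.
Variable A : R.
Hypothesis fpos : forall n, 0 < f n.
Hypothesis f0 : f 0%nat = 1.
Hypothesis f1 : f 1%nat = A.
Hypothesis f2 : f 2%nat + f 1%nat = f 0%nat.
Hypothesis frec : forall n, (1 <= n)%nat -> f (S (S n)) + f (S n) = b n * f n.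

Definition T k := (f k + f (S k)) / f k.

Lemma T_gt1 k : 1 < T k.
Proof.
  unfold T. pose proof (fpos k). pose proof (fpos (S k)).
  apply Rmult_lt_reg_r with (f k). lra. unfold Rdiv. rewrite Rmult_assoc, Rinv_l by lra. lra.
Qed.

Lemma bpos k : (1 <= k)%nat -> 0 < b k.
Proof.
  intro Hk. pose proof (frec k Hk). pose proof (fpos k). pose proof (fpos (S k)).
  pose proof (fpos (S (S k))). pose proof (b_nonneg k).
  destruct (Rle_lt_or_eq_dec 0 (b k) H3). auto. rewrite <- e in H. lra.
Qed.

Lemma T_rec k : (1 <= k)%nat -> T k = 1 + b k / T (S k).
Proof.
  intro Hk. pose proof (frec k Hk). pose proof (fpos k). pose proof (fpos (S k)).
  pose proof (fpos (S (S k))). pose proof (bpos k Hk).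
  unfold T. replace (f (S k) + f (S (S k))) with (b k * f k) by lra. field. repeat split; lra.
Qed.

Lemma sign_lemma n : forall k, (1 <= k)%nat -> 0 < (-1)^n * (T k - cf_tail n k).
Proof.
  induction n; intros k Hk.
  - simpl. pose proof (T_gt1 k). lra.
  - rewrite (T_rec k Hk). change (cf_tail (S n) k) with (1 + b k / cf_tail n (S k)).
    specialize (IHn (S k) ltac:(lia)).
    pose proof (T_gt1 (S k)). pose proof (cf_ge1 n (S k)). pose proof (bpos k Hk).
    replace ((-1) ^ S n * (1 + b k / T (S k) - (1 + b k / cf_tail n (S k))))
      with (((-1) ^ n * (T (S k) - cf_tail n (S k))) * (b k / (T (S k) * cf_tail n (S k))))
      by (simpl; field; lra).
    apply Rmult_lt_0_compat. lra. unfold Rdiv. apply Rmult_lt_0_compat. lra.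
    apply Rinv_0_lt_compat. nra.
Qed.

Lemma A_T : A = 1 / T 1.
Proof.
  unfold T. pose proof (fpos 1). replace (f 1%nat + f 2%nat) with 1 by (rewrite <- f0; lra). rewrite f1 in *. field. lra.
Qed.

Lemma diff_R N : Rapprox N - A = (T 1 - cf_tail N 1) / (cf_tail N 1 * T 1).
Proof.
  unfold Rapprox. rewrite A_T. pose proof (T_gt1 1). pose proof (cf_ge1 N 1). field. lra.
Qed.

Lemma even_gt N : Nat.Even N -> Rapprox N > A.
Proof.
  intros [m ->]. pose proof (sign_lemma (2*m) 1 ltac:(lia)).
  rewrite pow_1_even, Rmult_1_l in H.
  pose proof (diff_R (2*m)). pose proof (T_gt1 1). pose proof (cf_ge1 (2*m) 1).
  assert (0 < (T 1 - cf_tail (2 * m) 1) / (cf_tail (2 * m) 1 * T 1)).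
  { unfold Rdiv. apply Rmult_lt_0_compat. lra. apply Rinv_0_lt_compat. nra. }
  lra.
Qed.

Lemma odd_lt N : Nat.Odd N -> Rapprox N < A.
Proof.
  intros [m ->]. rewrite Nat.add_1_r. pose proof (sign_lemma (S (2*m)) 1 ltac:(lia)).
  rewrite pow_1_odd in H.
  pose proof (diff_R (S (2*m))). pose proof (T_gt1 1). pose proof (cf_ge1 (S (2*m)) 1).
  assert (0 < (cf_tail (S (2 * m)) 1 - T 1) / (cf_tail (S (2 * m)) 1 * T 1)).
  { unfold Rdiv. apply Rmult_lt_0_compat. lra. apply Rinv_0_lt_compat. nra. }
  assert (Rapprox (S (2*m)) - A = - ((cf_tail (S (2 * m)) 1 - T 1) / (cf_tail (S (2 * m)) 1 * T 1))).
  { rewrite H0. field. lra. }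
  lra.
Qed.

Lemma close N : Rabs (Rapprox N - A) <= 4 / (INR N + 2).
Proof.
  assert (H : Rabs (Rapprox N - A) <= Rabs (Rapprox N - Rapprox (S N))).
  { destruct (Nat.Even_or_Odd N) as [He|Ho].
    - pose proof (even_gt N He). assert (Nat.Odd (S N)) by (destruct He as [m ->]; exists m; lia).
      pose proof (odd_lt _ H0). rewrite !Rabs_right by lra. lra.
    - pose proof (odd_lt N Ho). assert (Nat.Even (S N)) by (destruct Ho as [m ->]; exists (S m); lia).
      pose proof (even_gt _ H0). rewrite !Rabs_left by lra. lra. }
  apply Rle_trans with (1 := H).
  assert (Rapprox N - Rapprox (S N) = E N 1 / (cf_tail N 1 * cf_tail (S N) 1)).
  { unfold Rapprox, E. pose proof (cf_ge1 N 1). pose proof (cf_ge1 (S N) 1). field. lra. }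
  rewrite H0. pose proof (cf_ge1 N 1). pose proof (cf_ge1 (S N) 1).
  unfold Rdiv. rewrite Rabs_mult, (Rabs_right (/ _)).
  2:{ apply Rle_ge, Rlt_le, Rinv_0_lt_compat. nra. }
  destruct (E_bound N 1) as [HE _]. simpl (INR 1) in HE.
  replace ((1+1)^2 / (INR N + 1 + 1)) with (4 / (INR N + 2)) in HE by (simpl; field; pose proof (pos_INR N); lra).
  assert (/ (cf_tail N 1 * cf_tail (S N) 1) <= 1).
  { rewrite <- Rinv_1. apply Rinv_le_contravar. lra. nra. }
  pose proof (Rabs_pos (E N 1)).
  apply Rle_trans with (Rabs (E N 1) * 1). apply Rmult_le_compat_l; lra. unfold Rdiv in HE. lra.
Qed.

Lemma cv : Un_cv Rapprox A.
Proof.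
  intros eps Heps. destruct (archimed_cor1 (eps/4)) as [N [HN HN0]]. lra.
  exists N. intros n Hn. unfold R_dist. eapply Rle_lt_trans. apply close.
  assert (INR N <= INR n) by (apply le_INR; lia).
  assert (0 < INR N) by (apply lt_0_INR; lia).
  assert (/ (INR n + 2) < / INR N) by (apply Rinv_lt_contravar; nra).
  unfold Rdiv. lra.
Qed.

End Main.
Definition h1 (q : nat) (x : R) : R := if Rle_dec x 0 then 0 else exp (- / x) * (1 - x) ^ q / x.
Definition h2 (q : nat) (x : R) : R := if Rle_dec x 0 then 0 else exp (- / x) * (1 - x) ^ q / (x * x).
Definition G (q : nat) (x : R) : R := if Rle_dec x 0 then 0 else exp (- / x) * (1 - x) ^ q.

Lemma exp_bound x : 0 < x -> exp (- / x) <= 27 * x ^ 3.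
Proof.
  intro Hx. set (y := / x / 3).
  assert (Hy : 0 < y) by (unfold y; apply Rmult_lt_0_compat; [apply Rinv_0_lt_compat; lra | lra]).
  assert (Hey : y < exp y) by (pose proof (exp_ineq1 y ltac:(lra)); lra).
  assert (He : exp (/ x) = exp y * exp y * exp y).
  { rewrite <- !exp_plus. f_equal. unfold y. field. lra. }
  rewrite exp_Ropp, He.
  assert (0 < y * y * y) by (apply Rmult_lt_0_compat; [apply Rmult_lt_0_compat|]; lra).
  assert (y * y * y <= exp y * exp y * exp y).
  { assert (y * y <= exp y * exp y) by (apply Rmult_le_compat; lra).
    apply Rmult_le_compat; nra. }
  apply Rle_trans with (/ (y * y * y)).
  apply Rinv_le_contravar; lra.
  right. unfold y. field. lra.
Qed.

Lemma pow01 q x : 0 <= x <= 1 -> 0 <= (1 - x) ^ q <= 1.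
Proof.
  intro H. induction q; simpl. lra. split. apply Rmult_le_pos; lra.
  apply Rle_trans with (1 * 1); [apply Rmult_le_compat; lra | lra].
Qed.

Lemma loc_pos x (Hx : 0 < x) (P : R -> Prop) : (forall y, 0 < y -> P y) -> locally x P.
Proof.
  intro HP. exists (mkposreal x Hx). intros y Hy. apply HP.
  unfold ball in Hy; simpl in Hy; unfold AbsRing_ball, abs, minus, plus, opp in Hy; simpl in Hy.
  apply Rabs_def2 in Hy. lra.
Qed.

Lemma cont0 (f : R -> R) (C : R) : f 0 = 0 -> 0 < C ->
  (forall y, Rabs y < 1 -> Rabs (f y) <= C * Rabs y) -> continuous f 0.
Proof.
  intros H0 HC Hb. apply continuity_pt_filterlim.
  intros eps Heps. exists (Rmin 1 (eps / C)). split.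
  apply Rmin_pos. lra. unfold Rdiv. apply Rmult_lt_0_compat; [lra|apply Rinv_0_lt_compat; lra].
  intros y [_ Hy]. simpl in *. unfold R_dist in *. rewrite H0. rewrite !Rminus_0_r in *.
  assert (Rabs y < 1) by (apply Rlt_le_trans with (1 := Hy); apply Rmin_l).
  assert (Rabs y < eps / C) by (apply Rlt_le_trans with (1 := Hy); apply Rmin_r).
  apply Rle_lt_trans with (C * Rabs y). apply Hb; auto.
  apply Rmult_lt_reg_r with (/ C). apply Rinv_0_lt_compat; lra.
  rewrite Rmult_comm, <- Rmult_assoc, Rinv_l, Rmult_1_l by lra. assumption.
Qed.

Lemma h2_small q y : Rabs y < 1 -> Rabs (h2 q y) <= 27 * Rabs y.
Proof.
  intro Hy. unfold h2. destruct (Rle_dec y 0).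
  - rewrite Rabs_R0. apply Rmult_le_pos. lra. apply Rabs_pos.
  - apply Rabs_def2 in Hy. assert (0 < y) by lra.
    pose proof (exp_bound y H). pose proof (pow01 q y ltac:(lra)).
    pose proof (exp_pos (- / y)).
    assert (Hn : 0 <= exp (- / y) * (1 - y) ^ q / (y * y)).
    { unfold Rdiv; apply Rmult_le_pos; [apply Rmult_le_pos; lra | apply Rlt_le, Rinv_0_lt_compat; nra]. }
    rewrite (Rabs_right _ (Rle_ge _ _ Hn)), (Rabs_right y) by lra.
    apply Rmult_le_reg_r with (y * y). nra.
    replace (exp (- / y) * (1 - y) ^ q / (y * y) * (y * y)) with (exp (- / y) * (1 - y) ^ q) by (field; lra).
    apply Rle_trans with (exp (- / y) * 1). apply Rmult_le_compat_l; lra.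
    apply Rle_trans with (27 * y ^ 3). lra. simpl. nra.
Qed.

Lemma h1_small q y : Rabs y < 1 -> Rabs (h1 q y) <= 27 * Rabs y.
Proof.
  intro Hy. unfold h1. destruct (Rle_dec y 0).
  - rewrite Rabs_R0. apply Rmult_le_pos. lra. apply Rabs_pos.
  - apply Rabs_def2 in Hy. assert (0 < y) by lra.
    pose proof (exp_bound y H). pose proof (pow01 q y ltac:(lra)).
    pose proof (exp_pos (- / y)).
    assert (Hn : 0 <= exp (- / y) * (1 - y) ^ q / y).
    { unfold Rdiv; apply Rmult_le_pos; [apply Rmult_le_pos; lra | apply Rlt_le, Rinv_0_lt_compat; nra]. }
    rewrite (Rabs_right _ (Rle_ge _ _ Hn)), (Rabs_right y) by lra.
    apply Rmult_le_reg_r with y. nra.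
    replace (exp (- / y) * (1 - y) ^ q / y * y) with (exp (- / y) * (1 - y) ^ q) by (field; lra).
    apply Rle_trans with (exp (- / y) * 1). apply Rmult_le_compat_l; lra.
    apply Rle_trans with (27 * y ^ 3). lra. simpl.
    assert (y * y <= y) by nra. assert (0 <= y*y) by nra. nra.
Qed.

Lemma h1_cont q x : 0 <= x -> continuous (h1 q) x.
Proof.
  intro Hx. destruct (Req_dec x 0) as [->|Hx0].
  - apply cont0 with 27. unfold h1. destruct (Rle_dec 0 0); [auto|lra]. lra. apply h1_small.
  - apply (continuous_ext_loc (h1 q) (fun y => exp (- / y) * (1 - y) ^ q / y)).
    + apply loc_pos. lra. intros y Hy. unfold h1. destruct (Rle_dec y 0); [lra|auto].
    + apply (@ex_derive_continuous R_AbsRing R_NormedModule). auto_derive. lra.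
Qed.

Lemma h2_cont q x : 0 <= x -> continuous (h2 q) x.
Proof.
  intro Hx. destruct (Req_dec x 0) as [->|Hx0].
  - apply cont0 with 27. unfold h2. destruct (Rle_dec 0 0); [auto|lra]. lra. apply h2_small.
  - apply (continuous_ext_loc (h2 q) (fun y => exp (- / y) * (1 - y) ^ q / (y * y))).
    + apply loc_pos. lra. intros y Hy. unfold h2. destruct (Rle_dec y 0); [lra|auto].
    + apply (@ex_derive_continuous R_AbsRing R_NormedModule). auto_derive. nra.
Qed.

Lemma G_der0 q : is_derive (G q) 0 0.
Proof.
  apply is_derive_Reals. intros eps Heps.
  assert (Hd : 0 < Rmin 1 (eps / 27)).
  { apply Rmin_pos. lra. unfold Rdiv. apply Rmult_lt_0_compat; [lra|apply Rinv_0_lt_compat; lra]. }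
  exists (mkposreal _ Hd). intros h Hh0 Hh. simpl in Hh.
  assert (Rabs h < 1) by (apply Rlt_le_trans with (1 := Hh); apply Rmin_l).
  assert (Rabs h < eps / 27) by (apply Rlt_le_trans with (1 := Hh); apply Rmin_r).
  replace ((G q (0 + h) - G q 0) / h - 0) with (h1 q h).
  - apply Rle_lt_trans with (27 * Rabs h). apply h1_small; auto. lra.
  - unfold G, h1. rewrite Rplus_0_l. destruct (Rle_dec 0 0); [|lra].
    destruct (Rle_dec h 0). field. auto. field. auto.
Qed.

Lemma G_der_pos0 x : 0 < x -> is_derive (G 0) x (h2 0 x).
Proof.
  intro Hx. apply (is_derive_ext_loc (fun y => exp (- / y))).
  - apply loc_pos. lra. intros y Hy. unfold G. destruct (Rle_dec y 0); [lra|]. simpl. ring.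
  - unfold h2. destruct (Rle_dec x 0); [lra|]. auto_derive. lra. simpl. field. lra.
Qed.

Definition dG (m : nat) (x : R) : R :=
  h2 (S m) x - INR (S m) * h1 m x + INR (S m) * h1 (S m) x.

Lemma G_der_posS m x : 0 < x -> is_derive (G (S m)) x (dG m x).
Proof.
  intro Hx. apply (is_derive_ext_loc (fun y => exp (- / y) * (1 - y) ^ (S m))).
  - apply loc_pos. lra. intros y Hy. unfold G. destruct (Rle_dec y 0); [lra|]. auto.
  - unfold dG, h1, h2. destruct (Rle_dec x 0); [lra|]. auto_derive. lra.
    change (match m with 0%nat => 1 | S _ => INR m + 1 end) with (INR (S m)). unfold Rminus. replace ((1 + - x)^S m) with ((1 + - x) * (1 + -x)^m) by (simpl; ring). set (EE := exp (- / x)). set (P := (1 + - x) ^ m). set (K := INR (S m)). field. lra.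
Qed.

Lemma in01 x : Rmin 0 1 <= x <= Rmax 0 1 -> 0 <= x <= 1.
Proof. rewrite Rmin_left, Rmax_right by lra. auto. Qed.

Lemma ex_h1 q : ex_RInt (h1 q) 0 1.
Proof. apply (@ex_RInt_continuous R_CompleteNormedModule). intros z Hz. apply in01 in Hz. apply h1_cont. lra. Qed.
Lemma ex_h2 q : ex_RInt (h2 q) 0 1.
Proof. apply (@ex_RInt_continuous R_CompleteNormedModule). intros z Hz. apply in01 in Hz. apply h2_cont. lra. Qed.

Lemma I1_pos q : 0 < RInt (h1 q) 0 1.
Proof.
  apply RInt_gt_0. lra.
  - intros x Hx. unfold h1. destruct (Rle_dec x 0); [lra|].
    unfold Rdiv. apply Rmult_lt_0_compat. apply Rmult_lt_0_compat. apply exp_pos. apply pow_lt; lra.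
    apply Rinv_0_lt_compat; lra.
  - intros x Hx. apply h1_cont. lra.
Qed.

Lemma I2_pos q : 0 < RInt (h2 q) 0 1.
Proof.
  apply RInt_gt_0. lra.
  - intros x Hx. unfold h2. destruct (Rle_dec x 0); [lra|].
    unfold Rdiv. apply Rmult_lt_0_compat. apply Rmult_lt_0_compat. apply exp_pos. apply pow_lt; lra.
    apply Rinv_0_lt_compat; nra.
  - intros x Hx. apply h2_cont. lra.
Qed.

Lemma I2_0 : RInt (h2 0) 0 1 = exp (-1).
Proof.
  apply is_RInt_unique.
  replace (exp (-1)) with (minus (G 0 1) (G 0 0)).
  - apply (@is_RInt_derive R_CompleteNormedModule).
    + intros x Hx. apply in01 in Hx. destruct (Req_dec x 0) as [->|].
      * replace (h2 0 0) with 0. apply G_der0. unfold h2. destruct (Rle_dec 0 0); [auto|lra].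
      * apply G_der_pos0. lra.
    + intros x Hx. apply in01 in Hx. apply h2_cont. lra.
  - unfold G. destruct (Rle_dec 1 0); [lra|]. destruct (Rle_dec 0 0); [|lra].
    unfold minus, plus, opp; simpl. rewrite Rinv_1, Rmult_1_r, Ropp_0, Rplus_0_r. f_equal.
Qed.

Lemma dG_cont m x : 0 <= x -> continuous (dG m) x.
Proof.
  intro Hx.
  apply (continuous_ext (fun y => plus (plus (h2 (S m) y) (opp (scal (INR (S m)) (h1 m y)))) (scal (INR (S m)) (h1 (S m) y)))).
  - intro y. unfold dG, plus, opp, scal; simpl. unfold mult; simpl. ring.
  - apply (continuous_plus (K:=R_AbsRing) (V:=R_NormedModule)).
    apply (continuous_plus (K:=R_AbsRing) (V:=R_NormedModule)). apply h2_cont; lra.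
    apply (continuous_opp (K:=R_AbsRing) (V:=R_NormedModule)).
    apply (continuous_scal (K:=R_AbsRing) (V:=R_NormedModule)). apply continuous_const. apply h1_cont; lra.
    apply (continuous_scal (K:=R_AbsRing) (V:=R_NormedModule)). apply continuous_const. apply h1_cont; lra.
Qed.

Lemma byparts m : RInt (h2 (S m)) 0 1 - INR (S m) * RInt (h1 m) 0 1 + INR (S m) * RInt (h1 (S m)) 0 1 = 0.
Proof.
  assert (H1 : is_RInt (dG m) 0 1 (minus (G (S m) 1) (G (S m) 0))).
  { apply (@is_RInt_derive R_CompleteNormedModule).
      + intros x Hx. apply in01 in Hx. destruct (Req_dec x 0) as [->|].
        * replace (dG m 0) with 0. apply G_der0. unfold dG, h1, h2. destruct (Rle_dec 0 0); [ring|lra].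
        * apply G_der_posS. lra.
      + intros x Hx. apply in01 in Hx. apply dG_cont. lra. }
  assert (E0 : minus (G (S m) 1) (G (S m) 0) = 0).
  { unfold G. destruct (Rle_dec 1 0); [lra|]. destruct (Rle_dec 0 0); [|lra].
      unfold minus, plus, opp; simpl. ring. }
  rewrite E0 in H1.
  pose proof (RInt_correct _ _ _ (ex_h2 (S m))) as A2.
  pose proof (RInt_correct _ _ _ (ex_h1 m)) as A1.
  pose proof (RInt_correct _ _ _ (ex_h1 (S m))) as A3.
  pose proof (is_RInt_plus _ _ _ _ _ _ (is_RInt_minus _ _ _ _ _ _ A2 (is_RInt_scal _ _ _ (INR (S m)) _ A1))
      (is_RInt_scal _ _ _ (INR (S m)) _ A3)) as H2.
  apply is_RInt_ext with (g := dG m) in H2.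
  2:{ intros y _. unfold dG, minus. set (c := INR (S m)). unfold plus, opp, scal. simpl. unfold mult. simpl. ring. }
  apply (is_RInt_unique (V:=R_CompleteNormedModule)) in H1. apply (is_RInt_unique (V:=R_CompleteNormedModule)) in H2. rewrite H1 in H2.
  set (c := INR (S m)) in *. unfold minus, plus, opp, scal in H2; simpl in H2. unfold plus, mult in H2; simpl in H2. lra.
Qed.

Lemma alg_pt q x : 0 < x -> exp (- / x) * (1 - x) ^ q / (x * x) =
  exp (- / x) * (1 - x) ^ q / x + exp (- / x) * (1 - x) ^ S q / (x * x).
Proof. intro Hx. simpl pow. set (EE := exp (- / x)). set (P := (1 - x) ^ q). field. lra. Qed.

Lemma alg q : RInt (h2 q) 0 1 = RInt (h1 q) 0 1 + RInt (h2 (S q)) 0 1.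
Proof.
  pose proof (RInt_plus (V:=R_CompleteNormedModule) (h1 q) (h2 (S q)) 0 1 (ex_h1 q) (ex_h2 _)) as HP.
  unfold plus in HP; simpl in HP. rewrite <- HP.
  apply RInt_ext. intros x Hx. rewrite Rmin_left, Rmax_right in Hx by lra.
  unfold h1, h2.  destruct (Rle_dec x 0); [lra|]. apply alg_pt. lra.
Qed.

Definition fseq (n : nat) : R :=
  match n with
  | O => 1
  | S k => if Nat.even k then exp 1 * INR (fact (Nat.div2 k)) * RInt (h1 (Nat.div2 k)) 0 1
           else exp 1 * INR (fact (Nat.div2 k)) * RInt (h2 (S (Nat.div2 k))) 0 1
  end.

Lemma fseq_odd m : fseq (S (2 * m)) = exp 1 * INR (fact m) * RInt (h1 m) 0 1.
Proof.
  change (fseq (S (2 * m))) with (if Nat.even (2*m) then exp 1 * INR (fact (Nat.div2 (2*m))) * RInt (h1 (Nat.div2 (2*m))) 0 1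
           else exp 1 * INR (fact (Nat.div2 (2*m))) * RInt (h2 (S (Nat.div2 (2*m)))) 0 1).
  rewrite Nat.div2_double, Nat.even_mul. reflexivity.
Qed.

Lemma fseq_even m : fseq (S (S (2 * m))) = exp 1 * INR (fact m) * RInt (h2 (S m)) 0 1.
Proof.
  change (fseq (S (S (2 * m)))) with (if Nat.even (S (2*m)) then exp 1 * INR (fact (Nat.div2 (S (2*m)))) * RInt (h1 (Nat.div2 (S (2*m)))) 0 1
           else exp 1 * INR (fact (Nat.div2 (S (2*m)))) * RInt (h2 (S (Nat.div2 (S (2*m))))) 0 1).
  rewrite Nat.div2_succ_double, Nat.even_succ, Nat.odd_mul. reflexivity.
Qed.

Lemma fseq_pos n : 0 < fseq n.
Proof.
  destruct n. simpl; lra.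
  destruct (Nat.Even_or_Odd n) as [[m ->]|[m ->]].
  - rewrite fseq_odd. pose proof (INR_fact_lt_0 m). pose proof (I1_pos m). pose proof (exp_pos 1).
    apply Rmult_lt_0_compat; [apply Rmult_lt_0_compat|]; lra.
  - rewrite Nat.add_1_r, fseq_even. pose proof (INR_fact_lt_0 m). pose proof (I2_pos (S m)). pose proof (exp_pos 1).
    apply Rmult_lt_0_compat; [apply Rmult_lt_0_compat|]; lra.
Qed.

Lemma integrand_eq x : 0 < x -> integrand x = h1 0 x.
Proof. intro Hx. unfold integrand, h1. destruct (Rle_dec x 0); [lra|]. simpl. field. lra. Qed.

Lemma ex_integrand : ex_RInt integrand 0 1.
Proof.
  apply (ex_RInt_ext (h1 0)). intros x Hx. rewrite Rmin_left, Rmax_right in Hx by lra.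
  symmetry. apply integrand_eq. lra. apply ex_h1.
Qed.

Theorem mainTheorem4 :
  exists pr : Riemann_integrable integrand 0 1,
    let A := exp 1 * RiemannInt pr in
    Un_cv Rapprox A /\
    (forall N : nat, Nat.Even N -> Rapprox N > A) /\
    (forall N : nat, Nat.Odd N -> Rapprox N < A).
Proof.
  exists (ex_RInt_Reals_0 _ _ _ ex_integrand). intro A.
  assert (HA : A = fseq 1).
  { unfold A. rewrite <- RInt_Reals. change 1%nat with (S (2 * 0)). rewrite fseq_odd. simpl (INR (fact 0)).
    rewrite Rmult_1_r. f_equal. apply RInt_ext. intros x Hx. rewrite Rmin_left, Rmax_right in Hx by lra.
    apply integrand_eq. lra. }
  assert (Hrec : forall n, (1 <= n)%nat -> fseq (S (S n)) + fseq (S n) = b n * fseq n).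
  { intros n Hn. destruct (Nat.Even_or_Odd n) as [[m ->]|[m ->]].
    - destruct m as [|m]. lia.
      rewrite b_even, fseq_even, fseq_odd.
      replace (2 * S m)%nat with (S (S (2 * m))) by lia. rewrite fseq_even.
      rewrite (alg (S m)). change (fact (S m)) with (S m * fact m)%nat. rewrite mult_INR.
      ring.
    - rewrite b_odd. replace (S (S (2 * m + 1))) with (S (2 * S m)) by lia.
      replace (S (2 * m + 1)) with (S (S (2 * m))) by lia.
      replace (2 * m + 1)%nat with (S (2 * m)) by lia.
      rewrite fseq_odd, fseq_even, fseq_odd.
      pose proof (byparts m). change (fact (S m)) with (S m * fact m)%nat. rewrite mult_INR.
      rewrite S_INR in *. 
      replace (RInt (h2 (S m)) 0 1) with ((INR m + 1) * RInt (h1 m) 0 1 - (INR m + 1) * RInt (h1 (S m)) 0 1) by lra.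
      ring. }
  assert (H2 : fseq 2 + fseq 1 = fseq 0).
  { change 2%nat with (S (S (2 * 0))). change 1%nat with (S (2 * 0)). rewrite fseq_even, fseq_odd.
    simpl fseq. simpl (INR (fact 0)). pose proof (alg 0). pose proof I2_0.
    replace (exp 1 * 1 * RInt (h2 1) 0 1 + exp 1 * 1 * RInt (h1 0) 0 1) with (exp 1 * RInt (h2 0) 0 1) by (rewrite H; ring).
    rewrite I2_0, <- exp_plus. replace (1 + -1) with 0 by ring. apply exp_0. }
  pose proof (cv fseq A fseq_pos eq_refl (eq_sym HA) H2 Hrec).
  pose proof (even_gt fseq A fseq_pos eq_refl (eq_sym HA) H2 Hrec).
  pose proof (odd_lt fseq A fseq_pos eq_refl (eq_sym HA) H2 Hrec).
  auto.
Qed.
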